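(* Let $\mathfrak{n}$ be a finite dimensional nilpotent Lie algebra over a field of characteristic zero, and let $d\ge 1$. Suppose $\mathfrak{n}=\bigoplus_{\alpha\in\mathbb{Z}_+^d}\mathfrak{n}_\alpha$ is a $\mathbb{Z}_+^d$-grading of $\mathfrak{n}$ with associated polynomial $p$. Then there exist a positive integer $k$ and a grading $\mathfrak{n}=\mathfrak{n}'_1\oplus\mathfrak{n}'_2\oplus\cdots\oplus\mathfrak{n}'_k$ (i.e. a $\mathbb{Z}_+$-grading with $\mathfrak{n}'_j=0$ for $j>k$) whose associated polynomial $p'$ satisfies $L(p')=L(p)$.
   Context: $\mathbb{Z}_+^d$ denotes the set of nonzero $d$-tuples $\alpha=(\alpha_1,\dots,\alpha_d)$ of nonnegative integers. A $\mathbb{Z}_+^d$-grading of a Lie algebra $\mathfrak{n}$ is a vector space decomposition $\mathfrak{n}=\bigoplus_{\alpha\in\mathbb{Z}_+^d}\mathfrak{n}_\alpha$ with $[\mathfrak{n}_\alpha,\mathfrak{n}_\beta]\subset\mathfrak{n}_{\alpha+\beta}$ for all $\alpha,\beta$. Its associated polynomial is $p(x_1,\dots,x_d)=\prod_{\alpha\in\mathbb{Z}_+^d}(1-x_1^{\alpha_1}\cdots x_d^{\alpha_d})^{\dim\mathfrak{n}_\alpha}=\sum_\alpha a_\alpha x_1^{\alpha_1}\cdots x_d^{\alpha_d}\in\mathbb{Z}[x_1,\dots,x_d]$, and the length of $p$ is $L(p)=\sum_\alpha|a_\alpha|$, the sum of the absolute values of its coefficients. A grading $\mathfrak{n}=\mathfrak{n}'_1\oplus\cdots\oplus\mathfrak{n}'_k$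 means $[\mathfrak{n}'_i,\mathfrak{n}'_j]\subset\mathfrak{n}'_{i+j}$ (with $\mathfrak{n}'_m=0$ for $m>k$), i.e. the case $d=1$, with associated polynomial $p'(x)=\prod_{i=1}^k(1-x^i)^{\dim\mathfrak{n}'_i}$. *)

(* Defs.v *)
From HB Require Import structures.
From mathcomp Require Import all_boot all_order all_algebra.
From mathcomp Require Import mpoly.
Set Implicit Arguments. Unset Strict Implicit. Unset Printing Implicit Defensive.
Import Order.TTheory GRing.Theory Num.Theory.
Local Open Scope ring_scope.

Definition is_lie_bracket (F : fieldType) (V : vectType F) (br : V -> V -> V) : Prop :=
  [/\ (forall (a : F) (x y z : V), br (a *: x + y) z = a *: br x z + br y z),
      (forall (a : F) (x y z : V), br x (a *: y + z) = a *: br x y + br x z),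
      (forall x : V, br x x = 0) &
      (forall x y z : V, br x (br y z) + br y (br z x) + br z (br x y) = 0)].

Definition lie_nilpotent (F : fieldType) (V : vectType F) (br : V -> V -> V) : Prop :=
  exists n : nat, forall (xs : seq V) (y : V), size xs = n -> foldr br y xs = 0.

(* Z_+^d-grading: G a = n_a for a monomial a (= d-tuple of naturals);
   S is a finite list containing every a with G a <> 0, none equal to 0. *)
Definition is_Zd_grading (F : fieldType) (V : vectType F) (br : V -> V -> V)
    (d : nat) (G : 'X_{1..d} -> {vspace V}) (S : seq 'X_{1..d}) : Prop :=
  [/\ uniq S && (0%MM \notin S),
      (forall a, a \notin S -> G a = 0%VS),
      (\sum_(a <- S) G a)%VS = fullv,
      directv (\sum_(a <- S) G a) &
      (forall a b (x y : V), x \in G a -> y \in G b -> br x y \in G (a + b)%MM)].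

Definition grading_poly (F : fieldType) (V : vectType F) (d : nat)
    (G : 'X_{1..d} -> {vspace V}) (S : seq 'X_{1..d}) : {mpoly int[d]} :=
  \prod_(a <- S) (1 - 'X_[a]) ^+ (\dim (G a)).

Definition mlength (d : nat) (p : {mpoly int[d]}) : nat :=
  \sum_(m <- msupp p) absz (p@_m)%R.

Definition is_Z_grading (F : fieldType) (V : vectType F) (br : V -> V -> V)
    (k : nat) (G : nat -> {vspace V}) : Prop :=
  [/\ G 0%N = 0%VS,
      (forall j, (k < j)%N -> G j = 0%VS),
      (\sum_(1 <= i < k.+1) G i)%VS = fullv,
      directv (\sum_(1 <= i < k.+1) G i) &
      (forall i j (x y : V), x \in G i -> y \in G j -> br x y \in G (i + j)%N)].

Definition Zgrading_poly (F : fieldType) (V : vectType F) (k : nat)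
    (G : nat -> {vspace V}) : {poly int} :=
  \prod_(1 <= i < k.+1) (1 - 'X^i) ^+ (\dim (G i)).

Definition plength (p : {poly int}) : nat :=
  \sum_(i < size p) absz (p`_i)%R.

(* Main.v *)
Require Import Defs.
From HB Require Import structures.
From mathcomp Require Import all_boot all_order all_algebra.
From mathcomp Require Import mpoly.
Import GRing.Theory.
Local Open Scope ring_scope.

Lemma regroup (R : Type) (idx : R) (op : Monoid.com_law idx) (T : eqType)
  (S : seq T) (lam : T -> nat) (r : seq nat) (F : T -> R) :
  uniq r -> (forall a, a \in S -> lam a \in r) ->
  \big[op/idx]_(i <- r) \big[op/idx]_(a <- S | lam a == i) F a
   = \big[op/idx]_(a <- S) F a.
Proof.
move=> ur Hr.
under eq_bigr do rewrite big_mkcond.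
rewrite exchange_big /=; apply: eq_big_seq => a aS.
rewrite (bigD1_seq (lam a)) ?Hr // eqxx big1 ?Monoid.mulm1 // => i /negbTE.
by rewrite eq_sym => ->.
Qed.

Lemma sum_closed (F : fieldType) (V : vectType F) (T : Type) (r : seq T)
  (P : pred T) (Us : T -> {vspace V}) (Q : V -> Prop) :
  Q 0 -> (forall x y, Q x -> Q y -> Q (x + y)) ->
  (forall a x, P a -> x \in Us a -> Q x) ->
  forall x, x \in (\sum_(a <- r | P a) Us a)%VS -> Q x.
Proof.
move=> Q0 QD QU; elim: r => [|a r IH] x.
  by rewrite big_nil memv0 => /eqP ->.
rewrite big_cons; case: ifP => Pa; last exact: IH.
by case/memv_addP => u Uu [v Vv ->]; apply: QD; [apply: (QU a) | apply: IH].
Qed.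

Lemma sumv_sup_seq (F : fieldType) (V : vectType F) (T : eqType) (r : seq T)
  (P : pred T) (Us : T -> {vspace V}) c :
  c \in r -> P c -> (Us c <= \sum_(a <- r | P a) Us a)%VS.
Proof. by move=> cr Pc; rewrite (big_rem c) // Pc addvSl. Qed.

Lemma absz_sum_single (T : eqType) (s : seq T) (P : pred T) (c : T -> int) :
  uniq s -> (forall m1 m2, m1 \in s -> m2 \in s -> P m1 -> P m2 -> m1 = m2) ->
  absz (\sum_(m <- s | P m) c m) = (\sum_(m <- s | P m) absz (c m))%N.
Proof.
move=> us Hs; case: (boolP (has P s)) => [/hasP [m0 m0s Pm0]|hN]; last first.
  by rewrite !big_hasC.
rewrite !(big_mkcond P) !(bigD1_seq m0) //= Pm0 !big1_seq ?addr0 ?addn0 //.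
  by move=> m /andP[mm0 ms]; case: ifP => // Pm; case/eqP: mm0; apply: Hs.
by move=> m /andP[mm0 ms]; case: ifP => // Pm; case/eqP: mm0; apply: Hs.
Qed.

Lemma digits_inj (N : nat) : (0 < N)%N -> forall n (f g : 'I_n -> nat),
  (forall i, f i < N)%N -> (forall i, g i < N)%N ->
  (\sum_(i < n) f i * N ^ i = \sum_(i < n) g i * N ^ i)%N -> f =1 g.
Proof.
move=> N0; elim=> [|n IH] f g fN gN.
  by move=> _ [].
rewrite !big_ord_recl !expn0 !muln1.
have E h : (\sum_(i < n) h (lift ord0 i) * N ^ (bump 0 i) =
            N * \sum_(i < n) h (lift ord0 i) * N ^ i)%N.
  by rewrite big_distrr /=; apply: eq_bigr => i _; rewrite expnS mulnCA.
rewrite !E => eq.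
have e0 : f ord0 = g ord0.
  by move: (congr1 (modn^~ N) eq); rewrite /= !(addnC (_ ord0)) !(mulnC N) !modnMDl !modn_small.
have e1 := IH (fun i => f (lift ord0 i)) (fun i => g (lift ord0 i))
  (fun i => fN _) (fun i => gN _).
move: eq; rewrite e0 => /addnI /eqP; rewrite eqn_mul2l eqn0Ngt N0 /= => /eqP /e1 e2.
move=> i; case: (unliftP ord0 i) => [j ->|->] //; exact: e2.
Qed.

Section Lam.
Variables (d N : nat).
Definition lam (m : 'X_{1..d}) : nat := (\sum_(i < d) m i * N ^ i)%N.

Lemma lamD m1 m2 : lam (m1 + m2)%MM = (lam m1 + lam m2)%N.
Proof. by rewrite /lam -big_split; apply: eq_bigr => i _; rewrite mnmDE mulnDl. Qed.

Lemma lam_eq0 m : (0 < N)%N -> lam m = 0%N -> m = 0%MM.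
Proof.
move=> N0 /eqP; rewrite /lam sum_nat_eq0 => /forallP H; apply/mnmP => i.
by move: (H i); rewrite /= muln_eq0 expn_eq0 mnm0E; case: N N0 => // N1 _; rewrite /= orbF => /eqP.
Qed.

Lemma lam_inj (m1 m2 : 'X_{1..d}) : (0 < N)%N -> (forall i, m1 i < N)%N -> (forall i, m2 i < N)%N ->
  lam m1 = lam m2 -> m1 = m2.
Proof. by move=> N0 h1 h2 e; apply/mnmP; exact: (@digits_inj N N0 d (fun i => m1 i) (fun i => m2 i) h1 h2 e). Qed.
End Lam.

Section P.
Variables (d N : nat).
Definition hX (i : 'I_d) : {poly int} := 'X^(N ^ i).
Definition phi (p : {mpoly int[d]}) : {poly int} := mmap (@polyC int) hX p.

Lemma mmap1_lam m : mmap1 hX m = 'X^(lam d N m).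
Proof.
rewrite /mmap1 /lam -prodrXr; apply: eq_bigr => i _.
by rewrite /hX -exprM mulnC.
Qed.

Lemma phiE p : phi p = \sum_(m <- msupp p) (p@_m)%:P * 'X^(lam d N m).
Proof. by rewrite /phi /mmap; apply: eq_bigr => m _; rewrite mmap1_lam. Qed.

Lemma coef_phi p j : (phi p)`_j = \sum_(m <- msupp p | lam d N m == j) p@_m.
Proof.
rewrite phiE coef_sum [RHS]big_mkcond /=; apply: eq_bigr => m _.
by rewrite coefCM coefXn eq_sym; case: eqP; rewrite ?mulr1 ?mulr0.
Qed.

Lemma plength_ext (q : {poly int}) M : (size q <= M)%N ->
  plength q = (\sum_(0 <= i < M) absz (q`_i)%R)%N.
Proof.
move=> le; rewrite /plength (big_cat_nat (leq0n (size q)) le) /= big_mkord.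
rewrite [X in (_ + X)%N]big1_seq ?addn0 // => i /andP[_].
by rewrite mem_index_iota => /andP[si _]; rewrite nth_default.
Qed.

Lemma phi_length p : (0 < N)%N -> (forall m, m \in msupp p -> forall i, m i < N)%N ->
  plength (phi p) = mlength p.
Proof.
move=> N0 hN.
set M := (size (phi p) + \sum_(m <- msupp p) (lam d N m).+1)%N.
rewrite (@plength_ext _ M) ?leq_addr //.
have Hi i : forall m1 m2, m1 \in msupp p -> m2 \in msupp p ->
    lam d N m1 == i -> lam d N m2 == i -> m1 = m2.
  move=> m1 m2 h1 h2 /eqP e1 /eqP e2; apply: (@lam_inj d N m1 m2 N0 (hN _ h1) (hN _ h2)).
  by rewrite e1 e2.
rewrite (eq_bigr _ (fun i _ => congr1 absz (coef_phi p i))).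
rewrite (eq_bigr _ (fun i _ => @absz_sum_single _ _ _ (fun m => p@_m) (msupp_uniq p) (Hi i))).
rewrite (@regroup _ 0%N addn) ?iota_uniq // => m ms.
rewrite mem_index_iota leq0n /= /M (big_rem m) //= ltn_addl // ltnS leq_addr //.
Qed.
End P.

Lemma brDl (F : fieldType) (V : vectType F) (br : V -> V -> V) :
  is_lie_bracket br -> forall x y z, br (x + y) z = br x z + br y z.
Proof. by rewrite /is_lie_bracket => -[H1 _ _ _] x y z; have := H1 1 x y z; rewrite !scale1r. Qed.
Lemma brDr (F : fieldType) (V : vectType F) (br : V -> V -> V) :
  is_lie_bracket br -> forall x y z, br x (y + z) = br x y + br x z.
Proof. by rewrite /is_lie_bracket => -[_ H2 _ _] x y z; have := H2 1 x y z; rewrite !scale1r. Qed.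
Lemma br0l (F : fieldType) (V : vectType F) (br : V -> V -> V) :
  is_lie_bracket br -> forall z, br 0 z = 0.
Proof. by move=> Hb z; apply/esym/(addrI (br 0 z)); rewrite addr0 -brDl // addr0. Qed.
Lemma br0r (F : fieldType) (V : vectType F) (br : V -> V -> V) :
  is_lie_bracket br -> forall z, br z 0 = 0.
Proof. by move=> Hb z; apply/esym/(addrI (br z 0)); rewrite addr0 -brDr // addr0. Qed.

Lemma mnm_le_deg d (m : 'X_{1..d}) i : (m i <= mdeg m)%N.
Proof. by rewrite mdegE (bigD1 i) //= leq_addr. Qed.

Theorem mainTheorem1 (F : fieldType) (V : vectType F) (br : V -> V -> V)
    (d : nat) (G : 'X_{1..d} -> {vspace V}) (S : seq 'X_{1..d}) :
  [pchar F] =i pred0 ->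
  is_lie_bracket br ->
  lie_nilpotent br ->
  (1 <= d)%N ->
  is_Zd_grading br G S ->
  exists (k : nat) (G' : nat -> {vspace V}),
    (0 < k)%N /\ is_Z_grading br k G' /\
    plength (Zgrading_poly k G') = mlength (grading_poly G S).
Proof.
move=> _ Hb _ _ [/andP[uS n0S] GS Gfull Gdir Gbr].
set p := grading_poly G S.
set N := (msize p).+1.
have N0 : (0 < N)%N by [].
have hN : forall m, m \in msupp p -> forall i, (m i < N)%N.
  by move=> m ms i; rewrite ltnS ltnW // (leq_ltn_trans (mnm_le_deg _ m i)) ?msize_mdeg_lt.
set l := lam d N.
set k := maxn 1 (\max_(a <- S) l a).
set G' := fun j => (\sum_(a <- S | l a == j) G a)%VS.
have lpos : forall a, a \in S -> (0 < l a)%N.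
  move=> a aS; rewrite lt0n; apply/negP => /eqP /(@lam_eq0 d N a N0) a0.
  by move: n0S; rewrite -a0 aS.
have lk : forall a, a \in S -> (l a <= k)%N.
  by move=> a aS; rewrite leq_max (@leq_bigmax_seq _ S xpredT l a aS) ?orbT.
have lr : forall a, a \in S -> l a \in index_iota 1 k.+1.
  by move=> a aS; rewrite mem_index_iota lpos // ltnS lk.
have ur : uniq (index_iota 1 k.+1) by rewrite iota_uniq.
have Gsum : (\sum_(1 <= i < k.+1) G' i)%VS = fullv.
  by rewrite -Gfull /G' (@regroup _ 0%VS addv).
have Gdim : (\sum_(a <- S) \dim (G a))%N = \dim (fullv : {vspace V}).
  by rewrite -Gfull; apply/esym/directvP.
have Dle : forall i, (\dim (G' i) <= \sum_(a <- S | l a == i) \dim (G a))%N.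
  by move=> i; apply: dimv_leq_sum.
have Dsum : (\sum_(1 <= i < k.+1) \dim (G' i))%N = \dim (fullv : {vspace V}).
  have Dt : (\sum_(1 <= i < k.+1) \sum_(a <- S | l a == i) \dim (G a))%N
      = \dim (fullv : {vspace V}).
    by rewrite (@regroup _ 0%N addn).
  apply/eqP; rewrite eqn_leq; apply/andP; split.
    by rewrite -Dt; apply: leq_sum => i _.
  by rewrite -{1}Gsum dimv_leq_sum.
have Deq : forall i, i \in index_iota 1 k.+1 ->
    \dim (G' i) = (\sum_(a <- S | l a == i) \dim (G a))%N.
  move=> i ir; apply/eqP; rewrite eqn_leq Dle /=.
  have Dt : (\sum_(1 <= i < k.+1) \sum_(a <- S | l a == i) \dim (G a))%N
      = \dim (fullv : {vspace V}).
    by rewrite (@regroup _ 0%N addn).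
  have R : (\sum_(i0 <- index_iota 1 k.+1 | i0 != i) \dim (G' i0) <=
            \sum_(i0 <- index_iota 1 k.+1 | i0 != i) \sum_(a <- S | l a == i0) \dim (G a))%N.
    by apply: leq_sum => j _.
  move: Dt Dsum R; rewrite (bigD1_seq i) //= (bigD1_seq i) //= => <- E R.
  by rewrite -(leq_add2r (\sum_(i0 <- index_iota 1 k.+1 | i0 != i) \dim (G' i0))) E leq_add2l.
have GG : forall c, (G c <= G' (l c))%VS.
  move=> c; case: (boolP (c \in S)) => cS; first exact: sumv_sup_seq.
  by rewrite GS // sub0v.
exists k, G'; split; first by rewrite leq_max.
split.
  split.
  - by rewrite /G' big1_seq // => a /andP[/eqP la aS]; move: (lpos a aS); rewrite la.
  - move=> j kj; rewrite /G' big1_seq // => a /andP[/eqP la aS].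
    by move: (lk a aS); rewrite la leqNgt kj.
  - exact: Gsum.
  - apply/directvP.
    change (\dim (\sum_(1 <= i < k.+1) G' i)%VS = \sum_(1 <= i < k.+1) \dim (G' i))%N.
    by rewrite Gsum Dsum.
  - move=> i j x y Hx Hy; move: x Hx.
    apply: (@sum_closed _ _ _ S (fun a => l a == i) G (fun x => br x y \in G' (i+j)%N)).
    + by rewrite br0l // mem0v.
    + by move=> x1 x2 h1 h2; rewrite brDl // memvD.
    move=> a x /eqP la Hx; move: y Hy.
    apply: (@sum_closed _ _ _ S (fun b => l b == j) G (fun y => br x y \in G' (i+j)%N)).
    + by rewrite br0r // mem0v.
    + by move=> x1 x2 h1 h2; rewrite brDr // memvD.
    move=> b y /eqP lb Hy.
    rewrite -la -lb /l -lamD; apply: (subvP (GG _)); exact: Gbr.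
have -> : Zgrading_poly k G' = phi d N p.
  rewrite /Zgrading_poly (eq_big_seq (fun i => (1 - 'X^i) ^+ (\sum_(a <- S | l a == i) \dim (G a)))); last first.
    by move=> i ir; rewrite Deq.
  under eq_bigr do rewrite -prodrXr.
  rewrite (eq_bigr (fun i => \prod_(a <- S | l a == i) (1 - 'X^(l a)) ^+ \dim (G a))); last first.
    by move=> i _; apply: eq_bigr => a /eqP ->.
  rewrite (@regroup _ 1 *%R) // /p /grading_poly /phi rmorph_prod /=.
  apply: eq_bigr => a _; rewrite rmorphXn rmorphB rmorph1; congr ((_ - _) ^+ _).
  by rewrite -mmap1_lam; symmetry; apply: mmapX.
exact: (@phi_length d N p N0 hN).
Qed.
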